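(* Let $k\ge1$, let $F$ be a 2-factor on $4k$ vertices, and let $C$ be a red/blue-coloring of $K_{4k}$ such that the red edges form two disjoint cliques of size $2k$ each (all other edges being blue). Then $C$ contains a copy of $F$ with at least $4k-2$ red edges and a copy of $F$ with at least $8k/3$ blue edges.
   Context: A 2-factor on $N$ vertices is a 2-regular graph on $N$ vertices. A copy of $F$ is a subgraph isomorphic to $F$. *)

(* Defs.v *)
From mathcomp Require Import all_boot.
Set Implicit Arguments. Unset Strict Implicit. Unset Printing Implicit Defensive.

Definition two_factor (V : finType) (F : rel V) : Prop :=
  symmetric F /\ irreflexive F /\ forall v : V, #|[set u | F v u]| = 2.

(* The red/blue colouring of K_n determined by a set A: an edge {x,y} is red iff
   x and y lie on the same side of the partition (A, ~A); otherwise blue. *)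
Definition two_clique_red (n : nat) (A : {set 'I_n}) (x y : 'I_n) : bool :=
  (x \in A) == (y \in A).

Definition col_edges (V : finType) (n : nat) (F : rel V) (f : V -> 'I_n)
    (col : rel 'I_n) : nat :=
  #|[set e : {set V} | [exists u, exists v,
        [&& e == [set u; v], F u v & col (f u) (f v)]]]|.

(* Main.v *)
Require Import Defs.
From mathcomp Require Import all_boot zify.
Set Implicit Arguments. Unset Strict Implicit. Unset Printing Implicit Defensive.

Definition cr (V : finType) (S : {set V}) (u v : V) : bool := (u \in S) != (v \in S).
Definition cdeg (V : finType) (F : rel V) (S : {set V}) (w : V) : nat :=
  \sum_(v : V) (F w v && cr S w v).
Definition Phi (V : finType) (F : rel V) (S : {set V}) : nat := \sum_(w : V) cdeg F S w.

Lemma card_sum (V : finType) (P : pred V) : #|[set v | P v]| = \sum_v P v.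
Proof. rewrite -sum1_card big_mkcond /=; apply eq_bigr => v _; rewrite inE; by case: (P v). Qed.

Lemma deg2 (V : finType) (F : rel V) : two_factor F -> forall w, \sum_v F w v = 2.
Proof. move=> [_ [_ H]] w; by rewrite -card_sum H. Qed.

Lemma cdeg_le2 (V : finType) (F : rel V) S w : two_factor F -> cdeg F S w <= 2.
Proof.
move=> H; rewrite -(deg2 H w) /cdeg; apply: leq_sum => v _ /=; by case: (F w v); case: (cr S w v).
Qed.

Lemma crC (V : finType) (S : {set V}) u v : cr S u v = cr S v u.
Proof. by rewrite /cr eq_sym. Qed.

Lemma flip (V : finType) (F : rel V) (S S' : {set V}) (w : V) : two_factor F ->
  (forall v, v != w -> (v \in S') = (v \in S)) -> (w \in S') = ~~ (w \in S) ->
  Phi F S' + 4 * cdeg F S w = Phi F S + 4.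
Proof.
move=> HF Hv Hw; have [Fs [Fi _]] := HF.
pose R T := \sum_(u | u != w) \sum_(v | v != w) (F u v && cr T u v).
have key : forall T, Phi F T = 2 * cdeg F T w + R T.
  move=> T; rewrite /Phi (bigD1 w) //=.
  have -> : \sum_(u | u != w) cdeg F T u =
     \sum_(u | u != w) ((F u w && cr T u w) + \sum_(v | v != w) (F u v && cr T u v)).
    by apply: eq_bigr => u _; rewrite /cdeg (bigD1 w).
  rewrite big_split /=.
  have -> : \sum_(u | u != w) (F u w && cr T u w) = cdeg F T w.
    rewrite /cdeg [in RHS](bigD1 w) //= Fi /=.
    by apply: eq_bigr => u _; rewrite Fs crC.
  rewrite /R; lia.
have HR : R S' = R S.
  apply: eq_bigr => u Hu; apply: eq_bigr => v Hv'.
  by rewrite /cr !Hv.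
have Hc : cdeg F S' w + cdeg F S w = 2.
  rewrite -(deg2 HF w) /cdeg -big_split /=; apply: eq_bigr => v _.
  case: (eqVneq v w) => [->|Hvw]; first by rewrite Fi.
  rewrite /cr Hw Hv //; by case: (F w v); case: (w \in S); case: (v \in S).
rewrite !key HR; lia.
Qed.

Lemma sum_pos (V : finType) (g : V -> nat) : 0 < \sum_v g v -> exists v, 0 < g v.
Proof.
move=> Hp; case: (pickP (fun v => 0 < g v)) => [v Hv|H]; first by exists v.
rewrite big1 // in Hp => v _; move: (H v) => /negbT; rewrite lt0n negbK => /eqP //.
Qed.

Lemma part1_sets (V : finType) (F : rel V) : two_factor F ->
  forall m, m <= #|V| -> exists S : {set V}, #|S| = m /\ Phi F S <= 4.
Proof.
move=> HF; have [Fs [Fi _]] := HF.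
elim=> [|m IH] Hm.
  exists set0; split; first by rewrite cards0.
  rewrite /Phi big1 // => w _; rewrite /cdeg big1 // => v _.
  by rewrite /cr !inE andbF.
have [S [HS HP]] := IH (ltnW Hm).
have flipU : forall z, z \notin S -> Phi F (z |: S) + 4 * cdeg F S z = Phi F S + 4.
  move=> z Hz; apply: flip => //; last by rewrite !inE eqxx (negbTE Hz).
  by move=> v Hv; rewrite !inE (negbTE Hv).
have cardU : forall z, z \notin S -> #|z |: S| = m.+1.
  by move=> z Hz; rewrite cardsU1 Hz HS.
have [z [Hz Hc]] : exists z, z \notin S /\ (0 < Phi F S -> 0 < cdeg F S z).
  case: (posnP (Phi F S)) => [H0|Hpos].
    case: (pickP (fun v => v \notin S)) => [z Hz|Hall].
      by exists z; split => //; rewrite H0.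
    have HST : S = setT.
      by apply/setP => v; rewrite inE; move: (Hall v) => /= /negbFE.
    move: HS Hm; rewrite HST cardsT; lia.
  have [w Hw] := sum_pos Hpos.
  have [v Hv] := sum_pos Hw.
  move: Hv; rewrite lt0b => /andP [Fwv crwv].
  case Hws: (w \in S).
    have Hvs : v \notin S by move: crwv; rewrite /cr Hws; case: (v \in S).
    exists v; split => // _; rewrite /cdeg (bigD1 w) //= Fs Fwv crC crwv; lia.
  by exists w; rewrite Hws.
exists (z |: S); split; first by apply: cardU.
have := flipU z Hz; case: (posnP (Phi F S)) => [H0|Hpos]; first lia.
have := Hc Hpos; lia.
Qed.

Lemma nth_index_inj (V W : eqType) (w0 : W) (s : seq V) (t : seq W) v v' :
  v \in s -> v' \in s -> size s = size t -> uniq t ->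
  nth w0 t (index v s) = nth w0 t (index v' s) -> v = v'.
Proof.
move=> Hv Hv' Hst Ht /eqP; rewrite nth_uniq // -?Hst ?index_mem // => /eqP Hi.
by rewrite -(nth_index v Hv) Hi nth_index.
Qed.

Lemma align (V W : finType) (w0 : W) (S : {set V}) (A : {set W}) :
  #|S| = #|A| -> #|V| = #|W| ->
  exists f : V -> W, injective f /\ forall v, (f v \in A) = (v \in S).
Proof.
move=> HSA HVW.
have HC : #|~: S| = #|~: A| by have := cardsC S; have := cardsC A; lia.
pose f v := if v \in S then nth w0 (enum A) (index v (enum S))
            else nth w0 (enum (~: A)) (index v (enum (~: S))).
have inA : forall v, v \in S -> nth w0 (enum A) (index v (enum S)) \in A.
  move=> v Hv; rewrite -mem_enum mem_nth // -cardE -HSA cardE index_mem mem_enum //.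
have inCA : forall v, v \notin S -> nth w0 (enum (~: A)) (index v (enum (~: S))) \in ~: A.
  move=> v Hv; rewrite -mem_enum mem_nth // -cardE -HC cardE index_mem mem_enum inE //.
have Hf : forall v, (f v \in A) = (v \in S).
  move=> v; rewrite /f; case: ifP => Hv; first by rewrite inA.
  by have := inCA v (negbT Hv); rewrite inE => /negbTE.
exists f; split => //.
move=> v v' Hvv.
have Hside : (v \in S) = (v' \in S) by rewrite -!Hf Hvv.
move: Hvv; rewrite /f -Hside; case: ifP => Hv.
  apply: nth_index_inj; rewrite ?mem_enum -?Hside ?enum_uniq // -!cardE //.
apply: nth_index_inj; rewrite ?mem_enum ?inE -?Hside ?Hv ?enum_uniq // -!cardE //.
Qed.

Lemma edges2 (V : finType) (F Q : rel V) : symmetric F -> irreflexive F -> symmetric Q ->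
  2 * #|[set e : {set V} | [exists u, exists v, [&& e == [set u; v], F u v & Q u v]]]|
  = \sum_u \sum_v (F u v && Q u v).
Proof.
move=> Fs Fi Qs.
pose P := [set p : V * V | F p.1 p.2 && Q p.1 p.2].
pose h := fun p : V * V => [set p.1; p.2].
have HE : [set e : {set V} | [exists u, exists v, [&& e == [set u; v], F u v & Q u v]]]
          = h @: P.
  apply/setP => e; rewrite inE; apply/existsP/imsetP.
    case=> u /existsP [v /and3P [/eqP -> H1 H2]].
    by exists (u, v); rewrite // inE /= H1 H2.
  case=> [[u v]]; rewrite inE /= => /andP [H1 H2] ->.
  by exists u; apply/existsP; exists v; rewrite eqxx H1 H2.
have HP : #|P| = \sum_u \sum_v (F u v && Q u v).
  rewrite pair_big /= -sum1_card big_mkcond /=; apply: eq_bigr => p _.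
  by rewrite inE; case: (_ && _).
rewrite HE -HP -[#|P|]sum1_card (partition_big_imset h P (fun=> 1)) /= mulnC -sum_nat_const.
apply: eq_bigr => e /imsetP [[u v] Huv ->].
move: Huv; rewrite inE /= => /andP [Fuv Quv].
have Huv' : u != v by apply: contraTneq Fuv => ->; rewrite Fi.
have -> : \sum_(i in P | h i == h (u, v)) 1 = #|[set (u, v); (v, u)]|.
  rewrite -sum1_card; apply: eq_bigl => p; rewrite !inE.
  case: p => a b /=; rewrite /h /=.
  apply/idP/idP.
    case/andP => /andP [Fab Qab] /eqP Hs.
    have Hab : a != b by apply: contraTneq Fab => ->; rewrite Fi.
    have : a \in [set u; v] by rewrite -Hs !inE eqxx.
    have : b \in [set u; v] by rewrite -Hs !inE eqxx orbT.
    rewrite !inE => /orP [] /eqP Hb /orP [] /eqP Ha; subst a b;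
      by rewrite ?eqxx ?orbT // in Hab *.
  case/orP => /eqP [-> ->]; first by rewrite Fuv Quv eqxx.
  by rewrite Fs Qs Fuv Quv setUC eqxx.
rewrite cards2; case: eqP => // [[E]]; by rewrite E eqxx in Huv'.
Qed.

Lemma cdeg_in (V : finType) (F : rel V) (S : {set V}) (u : V) : u \in S ->
  cdeg F S u = \sum_(v in ~: S) F u v.
Proof.
move=> Hu; rewrite /cdeg [RHS]big_mkcond; apply: eq_bigr => v _.
by rewrite /cr Hu inE; case: (v \in S); case: (F u v).
Qed.

Lemma cdeg_out (V : finType) (F : rel V) (S : {set V}) (u : V) : u \notin S ->
  cdeg F S u = \sum_(v in S) F u v.
Proof.
move=> Hu; rewrite /cdeg [RHS]big_mkcond; apply: eq_bigr => v _.
by rewrite /cr (negbTE Hu); case: (v \in S); case: (F u v).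
Qed.

Lemma dc (V : finType) (F : rel V) (S : {set V}) : symmetric F ->
  \sum_(u in S) cdeg F S u = \sum_(x in ~: S) cdeg F S x.
Proof.
move=> Fs.
rewrite (eq_bigr (fun u => \sum_(v in ~: S) F u v)); last by move=> u Hu; rewrite cdeg_in.
rewrite [RHS](eq_bigr (fun u => \sum_(v in S) F u v)); last first.
  by move=> u; rewrite inE => Hu; rewrite cdeg_out.
rewrite exchange_big /=; apply: eq_bigr => x _; apply: eq_bigr => u _; by rewrite Fs.
Qed.

Lemma cdegC (V : finType) (F : rel V) (S : {set V}) (u : V) : cdeg F (~: S) u = cdeg F S u.
Proof.
rewrite /cdeg; apply: eq_bigr => v _; rewrite /cr !inE.
by case: (u \in S); case: (v \in S).
Qed.

Lemma swap_cond (V : finType) (F : rel V) (S : {set V}) : two_factor F ->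
  (forall T : {set V}, #|T| = #|S| -> Phi F T <= Phi F S) ->
  forall u x, u \in S -> x \notin S -> 2 + F u x <= cdeg F S u + cdeg F S x.
Proof.
move=> HF Hmax u x Hu Hx; have [Fs [Fi _]] := HF.
have Hux : x != u by apply/eqP => E; rewrite E Hu in Hx.
pose S1 := S :\ u; pose S2 := x |: S1.
have E1 : Phi F S1 + 4 * cdeg F S u = Phi F S + 4.
  apply: flip => //; last by rewrite !inE eqxx Hu.
  by move=> v Hv; rewrite !inE Hv.
have E2 : Phi F S2 + 4 * cdeg F S1 x = Phi F S1 + 4.
  apply: flip => //; last by rewrite !inE eqxx /= (negbTE Hx) andbF.
  by move=> v Hv; rewrite !inE (negbTE Hv).
have E3 : cdeg F S1 x + F x u = cdeg F S x.
  rewrite /cdeg [X in _ = X](bigD1 u) // [X in X + _ = _](bigD1 u) //=.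
  have -> : cr S1 x u = false by rewrite /cr /S1 !inE eqxx (negbTE Hx) !andbF.
  have -> : cr S x u = true by rewrite /cr Hu (negbTE Hx).
  rewrite andbF andbT add0n addnC; congr (_ + _); apply: eq_bigr => v Hv.
  by rewrite /cr !inE Hv (negbTE Hux) /= (negbTE Hx).
have C2 : #|S2| = #|S|.
  by rewrite /S2 /S1 cardsU1 !inE (negbTE Hx) andbF /= [in RHS](cardsD1 u S) Hu.
have := Hmax _ C2; rewrite Fs in E3; lia.
Qed.

Lemma stepA (V : finType) (F : rel V) (S : {set V}) : two_factor F ->
  #|S| <= #|~: S| ->
  (forall u x, u \in S -> x \notin S -> 2 + F u x <= cdeg F S u + cdeg F S x) ->
  forall w, w \in S -> 0 < cdeg F S w.
Proof.
move=> HF Hcard Hst w Hw; have [Fs [Fi _]] := HF.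
rewrite lt0n; apply/negP => /eqP H0.
have Hout : \sum_(x in ~: S) cdeg F S x = #|~: S| * 2.
  rewrite -sum_nat_const; apply: eq_bigr => x; rewrite inE => Hx.
  have := Hst w x Hw Hx; have := cdeg_le2 S x HF; lia.
have Hin : \sum_(u in S) cdeg F S u + 2 <= #|S| * 2.
  rewrite -sum_nat_const (bigD1 w) //= [X in _ <= X](bigD1 w) //= H0.
  have : \sum_(i in S | i != w) cdeg F S i <= \sum_(i in S | i != w) 2.
    by apply: leq_sum => i _; apply: cdeg_le2.
  lia.
rewrite dc // Hout in Hin; lia.
Qed.

Lemma count2 (V : finType) (F : rel V) (S : {set V}) : two_factor F ->
  #|S| = #|~: S| ->
  (forall u x, u \in S -> x \notin S -> 2 + F u x <= cdeg F S u + cdeg F S x) ->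
  2 * #|V| <= 3 * \sum_(u in S) cdeg F S u.
Proof.
move=> HF Hcard Hst; have [Fs [Fi _]] := HF.
have Hpos : forall w, 0 < cdeg F S w.
  move=> w; case Hw: (w \in S); first by apply: (stepA HF) => //; rewrite Hcard.
  rewrite -cdegC; apply: (stepA (S := ~: S) HF).
  - by rewrite setCK Hcard.
  - move=> u x; rewrite !inE negbK => Hu Hx; rewrite !cdegC Fs [X in _ <= X]addnC; exact: Hst.
  - by rewrite inE Hw.
set C := \sum_(u in S) cdeg F S u.
have Hone : forall w, 2 - cdeg F S w = (cdeg F S w == 1) * cdeg F S w.
  move=> w; have := Hpos w; have := cdeg_le2 S w HF.
  case: (cdeg F S w) => [|[|[|n]]] //.
have Htot : \sum_w (2 - cdeg F S w) + \sum_w cdeg F S w = #|V| * 2.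
  rewrite -big_split -sum_nat_const /=; apply: eq_bigr => w _.
  have := cdeg_le2 S w HF; lia.
have HPhi : \sum_w cdeg F S w = C + C.
  rewrite (bigID (fun w => w \in S)) /= /C dc //; congr (_ + _).
  by apply: eq_bigl => w; rewrite inE.
have HU : \sum_w (2 - cdeg F S w) <= C.
  rewrite (bigID (fun w => w \in S)) /=.
  have E1 : \sum_(w | w \in S) (2 - cdeg F S w) =
            \sum_(w in S) \sum_(x in ~: S) (cdeg F S w == 1) * F w x.
    apply: eq_bigr => w Hw; by rewrite Hone cdeg_in // big_distrr.
  have E2 : \sum_(w | w \notin S) (2 - cdeg F S w) =
            \sum_(w in S) \sum_(x in ~: S) (cdeg F S x == 1) * F w x.
    rewrite exchange_big /=.
    rewrite [LHS](eq_bigl (fun w => w \in ~: S)); last by move=> w; rewrite inE.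
    apply: eq_bigr => x; rewrite inE => Hx.
    rewrite Hone cdeg_out // big_distrr; apply: eq_bigr => w _; by rewrite Fs.
  rewrite E1 E2 -big_split /= /C; apply: leq_sum => w Hw.
  rewrite [leqRHS]cdeg_in // -big_split /=; apply: leq_sum => x; rewrite inE => Hx.
  have := Hst w x Hw Hx; case: (F w x) => /=; last by rewrite !muln0.
  case: eqP; case: eqP; lia.
lia.
Qed.

Lemma Phi_split (V : finType) (F : rel V) (S : {set V}) : symmetric F ->
  Phi F S = 2 * \sum_(u in S) cdeg F S u.
Proof.
move=> Fs; rewrite /Phi (bigID (fun w => w \in S)) /= dc // mul2n -addnn; congr (_ + _).
by apply: eq_bigl => w; rewrite inE.
Qed.

Lemma colors (V : finType) (F : rel V) n (A : {set 'I_n}) (S : {set V}) (f : V -> 'I_n) :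
  two_factor F -> (forall v, (f v \in A) = (v \in S)) ->
  2 * col_edges F f (fun x y => ~~ two_clique_red A x y) = Phi F S /\
  2 * col_edges F f (two_clique_red A) + Phi F S = 2 * #|V|.
Proof.
move=> HF Hf; have [Fs [Fi _]] := HF.
have Q1 : symmetric (fun u v => ~~ two_clique_red A (f u) (f v)).
  by move=> u v; rewrite /two_clique_red eq_sym.
have Q2 : symmetric (fun u v => two_clique_red A (f u) (f v)).
  by move=> u v; rewrite /two_clique_red eq_sym.
have E1 := edges2 Fs Fi Q1.
have E2 := edges2 Fs Fi Q2.
rewrite /col_edges E1 E2; split.
  apply: eq_bigr => u _; apply: eq_bigr => v _; by rewrite /two_clique_red !Hf.
rewrite /Phi -big_split mulnC -sum_nat_const /=; apply: eq_bigr => u _.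
rewrite /cdeg -big_split -(deg2 HF u) /=; apply: eq_bigr => v _.
rewrite /two_clique_red /cr !Hf; by case: (F u v); case: (u \in S); case: (v \in S).
Qed.

Theorem lemma3p9 (k : nat) (V : finType) (F : rel V) (A : {set 'I_(4 * k)}) :
  1 <= k -> #|V| = 4 * k -> two_factor F -> #|A| = 2 * k ->
  (exists f : V -> 'I_(4 * k), injective f /\
     4 * k - 2 <= col_edges F f (two_clique_red A)) /\
  (exists f : V -> 'I_(4 * k), injective f /\
     8 * k <= 3 * col_edges F f (fun x y => ~~ two_clique_red A x y)).
Proof.
move=> Hk HV HF HA; have [Fs [Fi _]] := HF.
have H0 : 0 < 4 * k by lia.
pose w0 : 'I_(4 * k) := Ordinal H0.
have HVW : #|V| = #|'I_(4 * k)| by rewrite card_ord.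
have [S0 [HS0 HP0]] := part1_sets HF (m := 2 * k) (ltac:(rewrite HV; lia)).
split.
  have Hc0 : #|S0| = #|A| by rewrite HS0 HA.
  have [f [Hinj Hf]] := align w0 Hc0 HVW.
  exists f; split => //.
  have [_ E] := colors HF Hf; lia.
pose S := [arg max_(T > S0 | #|T| == 2 * k) Phi F T].
case: (@arg_maxnP _ S0 (fun T : {set V} => #|T| == 2 * k) (Phi F)); first by rewrite HS0.
move=> T /eqP HT Hmax.
have Hmax' : forall T' : {set V}, #|T'| = #|T| -> Phi F T' <= Phi F T.
  by move=> T' HT'; apply: Hmax; rewrite HT' HT.
have Hst := swap_cond HF Hmax'.
have HC : #|T| = #|~: T| by have := cardsC T; lia.
have Hc := count2 HF HC Hst.
have Hc1 : #|T| = #|A| by rewrite HT HA.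
have [f [Hinj Hf]] := align w0 Hc1 HVW.
exists f; split => //.
have [E _] := colors HF Hf.
have := Phi_split T Fs; lia.
Qed.
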